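(* Let $a_{01},a_{10}>0$, $a_\triangle=a_{01}+a_{10}$, and let $x_\triangle\ge0$ be a fixed integer (prior swing count). Let $h(k\mid m,\theta)=\binom{m}{k}\theta^k(1-\theta)^{m-k}$, and let $p_H(\theta)=\mathrm{Beta}(\theta\mid a_{01},a_{10})$. Define the conditionally-intrinsic prior $$p^{CI}_H(\theta\mid H_0)=p_H(\theta)\,E_\theta\!\left[\frac{h(x_{01}\mid x_\triangle,1/2)}{\int_0^1h(x_{01}\mid x_\triangle,t)p_H(t)\,dt}\right],$$ the expectation being over $x_{01}\sim h(\cdot\mid x_\triangle,\theta)$. Let observed data consist of integers $0\le n_{01}\le n_\triangle$, and define $m^{Co}_{H_0}(n)=h(n_{01}\mid n_\triangle,1/2)$, $m^{CI}_H(n)=\int_0^1h(n_{01}\mid n_\triangle,\theta)p^{CI}_H(\theta\mid H_0)\,d\theta$ and $BF^{CI}_{H,H_0}(n)=m^{CI}_H(n)/m^{Co}_{H_0}(n)$. Then $$BF^{CI}_{H,H_0}(n)=\sum_{x_{01}=0}^{x_\triangle}\binom{x_\triangle}{x_{01}}\left(\frac12\right)^{x_\triangle}BF^{Co}_{H,H_0}(n\mid x),$$ where $$BF^{Co}_{H,H_0}(n\mid x)=2^{n_\triangle}\,\frac{B\big(a_{01}+x_{01}+n_{01},\,a_\triangle-a_{01}+x_\triangle-x_{01}+n_\triangle-n_{01}\big)}{B\big(a_{01}+x_{01},\,a_\triangle-a_{01}+x_\triangle-x_{01}\big)}.$$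
   Context: $B(A,B)=\int_0^1t^{A-1}(1-t)^{B-1}dt$ is the Beta function and $\mathrm{Beta}(\theta\mid A,B)=\theta^{A-1}(1-\theta)^{B-1}/B(A,B)$ the Beta density. $H$ is the hypothesis $\theta\neq1/2$ and $H_0$ the hypothesis $\theta=1/2$, where $\theta$ is the success probability in the binomial model $h(n_{01}\mid n_\triangle,\theta)$ for the number $n_{01}$ of $0\to1$ swings among $n_\triangle$ total swings in a matched-pair $2\times2$ table. *)

(* Defs.v *)
From HB Require Import structures.
From mathcomp Require Import all_boot all_order all_algebra.
From mathcomp Require Import all_classical all_reals all_analysis.
Set Implicit Arguments. Unset Strict Implicit. Unset Printing Implicit Defensive.
Import Order.TTheory GRing.Theory Num.Theory.
Import numFieldNormedType.Exports.
Local Open Scope classical_set_scope.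
Local Open Scope ring_scope.

Section Defs.
Variable R : realType.

Definition leb := (@lebesgue_measure R).

Definition binom_pmf (k m : nat) (theta : R) : R :=
  ('C(m, k))%:R * theta ^+ k * (1 - theta) ^+ (m - k).

Definition betaF (A B : R) : R :=
  \int[leb]_(t in `[0%R, 1%R]) (t `^ (A - 1) * (1 - t) `^ (B - 1)).

Definition beta_dens (A B : R) (theta : R) : R :=
  theta `^ (A - 1) * (1 - theta) `^ (B - 1) / betaF A B.

Definition pH (a01 a10 : R) (theta : R) : R := beta_dens a01 a10 theta.

Definition marg_H (a01 a10 : R) (xT x01 : nat) : R :=
  \int[leb]_(t in `[0%R, 1%R]) (binom_pmf x01 xT t * pH a01 a10 t).

Definition pCI (a01 a10 : R) (xT : nat) (theta : R) : R :=
  pH a01 a10 theta *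
  \sum_(x01 < xT.+1)
     binom_pmf x01 xT theta *
     (binom_pmf x01 xT (1 / 2) / marg_H a01 a10 xT x01).

Definition mCo_H0 (n01 nT : nat) : R := binom_pmf n01 nT (1 / 2).

Definition mCI_H (a01 a10 : R) (xT n01 nT : nat) : R :=
  \int[leb]_(theta in `[0%R, 1%R]) (binom_pmf n01 nT theta * pCI a01 a10 xT theta).

Definition BF_CI (a01 a10 : R) (xT n01 nT : nat) : R :=
  mCI_H a01 a10 xT n01 nT / mCo_H0 n01 nT.

Definition BF_Co (a01 aT : R) (xT x01 n01 nT : nat) : R :=
  2 ^+ nT *
  (betaF (a01 + x01%:R + n01%:R)
         (aT - a01 + xT%:R - x01%:R + nT%:R - n01%:R)
   / betaF (a01 + x01%:R) (aT - a01 + xT%:R - x01%:R)).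

End Defs.

(* Main.v *)
Require Import Defs.
From HB Require Import structures.
From mathcomp Require Import all_boot all_order all_algebra.
From mathcomp Require Import all_classical all_reals all_analysis.
From mathcomp Require Import measurable_realfun.
From mathcomp Require Import ring lra.
#[warning="-warn-library-file-internal-analysis"]
From mathcomp Require Import unstable.
Import Order.TTheory GRing.Theory Num.Theory.
Import numFieldNormedType.Exports.
Local Open Scope classical_set_scope.
Local Open Scope ring_scope.

Section S.
Variable R : realType.
Local Notation mu := (@lebesgue_measure R).

Lemma powR_cont (r x : R) : 0 < x -> {for x, continuous (fun y : R => y `^ r)}.
Proof.
move=> x0; apply: differentiable_continuous; apply/derivable1_diffP.
by apply: derivable_powR; rewrite in_itv /= x0.
Qed.

Lemma FTC_pow (r c : R) : -1 < r -> 0 < c -> c < 1 ->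
  (\int[mu]_(x in `[c, 1%R]) ((x : R) `^ r)%:E = ((r+1)^-1 - (r+1)^-1 * c `^ (r+1))%:E)%E.
Proof.
move=> r1 c0 c1.
have r10 : 0 < r + 1 by rewrite -ltrBlDr sub0r.
pose F := fun x : R => (r+1)^-1 * x `^ (r+1).
have dF (x : R) : 0 < x -> is_derive x (1:R) F ((r+1)^-1 * ((r+1) * x `^ (r + 1 - 1))).
  move=> x0; rewrite /F.
  apply: is_deriveZ; exact: is_derive1_powR.
have Fc (x : R) : 0 < x -> {for x, continuous F}.
  move=> x0; apply: continuousM; first exact: cvg_cst.
  exact: powR_cont.
rewrite (@continuous_FTC2 _ _ F) //.
- rewrite /F powR1 mulr1 EFinB //.
- apply: continuous_in_subspaceT => x; rewrite inE /= in_itv /= => /andP[cx _].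
  apply: powR_cont; exact: lt_le_trans cx.
- split.
  + move=> x; rewrite in_itv /= => /andP[cx _].
    have := dF x (lt_trans c0 cx); by case.
  + by apply: cvg_at_right_filter; apply: Fc.
  + by apply: cvg_at_left_filter; apply: Fc.
- move=> x; rewrite in_itv /= => /andP[cx _].
  have x0 : 0 < x := lt_trans c0 cx.
  rewrite derive1E (@derive_val _ _ _ _ _ _ _ (dF x x0)).
  rewrite addrK mulrA mulVf ?mul1r //; exact: lt0r_neq0.
Qed.

Lemma bigcup_bound (F : (set R)^nat) (f : R -> R) (M : R) :
  nondecreasing_seq F -> (forall i, measurable (F i)) ->
  (forall i, measurable_fun (F i) f) -> (forall i x, F i x -> 0 <= f x) ->
  (forall i, (\int[mu]_(x in F i) (f x)%:E <= M%:E)%E) ->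
  (\int[mu]_(x in \bigcup_i F i) (f x)%:E <= M%:E)%E.
Proof.
move=> ndF mF mf f0 HM.
have := @ge0_nondecreasing_set_cvg_integral _ (measurableTypeR R) R F (EFin \o f) mu ndF mF.
move=> /(_ (fun i => ltac:(apply/measurable_EFinP; exact: mf))).
move=> /(_ (fun i x Fx => (f0 i x Fx : (0 <= (f x)%:E)%E))) H.
rewrite -(cvg_lim _ H) //; apply: lime_le; first by apply/cvg_ex; eexists; exact: H.
by apply: nearW => n; exact: HM.
Qed.

Lemma pow_int (r : R) : -1 < r ->
  (\int[mu]_(x in `]0%R, 1%R]) ((x : R) `^ r)%:E <= ((r+1)^-1)%:E)%E.
Proof.
move=> r1.
have r10 : 0 < r + 1 by rewrite -ltrBlDr sub0r.
pose F := fun i : nat => `[(i.+2%:R : R)^-1, 1%R]%classic.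
have -> : `]0%R, 1%R]%classic = \bigcup_i F i.
  apply/seteqP; split => x /=.
    rewrite in_itv /= => /andP[x0 x1].
    have [k Hk] := ltr_add_invr x0; exists k.+1 => //.
    rewrite /F /= in_itv /= x1 andbT; rewrite add0r in Hk.
    apply: ltW; apply: le_lt_trans Hk.
    by rewrite lef_pV2 ?posrE ?ltr0n // ler_nat ltnS; exact: leqW (leqnSn k).
  move=> [i _]; rewrite /F /= !in_itv /= => /andP[ix ->]; rewrite andbT.
  by apply: lt_le_trans ix; rewrite invr_gt0 ltr0n.
apply: bigcup_bound.
- move=> i j ij; rewrite subsetEset => x; rewrite /F /= !in_itv /= => /andP[ix ->].
  rewrite andbT; apply: le_trans ix.
  by rewrite lef_pV2 ?posrE ?ltr0n // ler_nat.
- by move=> i; exact: measurable_itv.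
- by move=> i; apply: measurable_funTS; exact: measurable_powR.
- by move=> i x _; exact: powR_ge0.
- move=> i; rewrite FTC_pow //; last by rewrite invf_lt1 ?ltr1n // ltr0n.
  by rewrite lee_fin gerBl // mulr_ge0 // ?powR_ge0 // invr_ge0 ltW.
Qed.

Lemma pow1m_int (r : R) : -1 < r ->
  (\int[mu]_(x in `[0%R, 1%R[) ((1 - x : R) `^ r)%:E <= ((r+1)^-1)%:E)%E.
Proof.
move=> r1.
pose F := fun i : nat => `[0%R, 1 - (i.+2%:R : R)^-1]%classic.
have -> : `[0%R, 1%R[%classic = \bigcup_i F i.
  apply/seteqP; split => x /=.
    rewrite in_itv /= => /andP[x0 x1].
    have x1' : 0 < 1 - x by rewrite subr_gt0.
    have [k Hk] := ltr_add_invr x1'; exists k.+1 => //.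
    rewrite /F /= in_itv /= x0 /=; rewrite add0r in Hk.
    rewrite lerBrDr -lerBrDl; apply: ltW; apply: le_lt_trans Hk.
    by rewrite lef_pV2 ?posrE ?ltr0n // ler_nat ltnS; exact: leqW (leqnSn k).
  move=> [i _]; rewrite /F /= !in_itv /= => /andP[-> xi] /=.
  by apply: (le_lt_trans xi); rewrite gtrBl invr_gt0 ltr0n.
apply: bigcup_bound.
- move=> i j ij; rewrite subsetEset => x; rewrite /F /= !in_itv /= => /andP[-> ix] /=.
  apply: (le_trans ix); apply: lerB => //.
  by rewrite lef_pV2 ?posrE ?ltr0n // ler_nat.
- by move=> i; exact: measurable_itv.
- move=> i; apply: measurable_funTS.
  apply: (@measurableT_comp _ _ _ _ _ _ (@powR R ^~ r)); first exact: measurable_powR.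
  by apply: measurable_funB => //; exact: measurable_cst.
- by move=> i x _; exact: powR_ge0.
- move=> i; rewrite /F.
  have c01 : (0 <= 1 - (i.+2%:R : R)^-1 <= 1).
    rewrite subr_ge0 gerBl invr_ge0 ler0n andbT.
    by rewrite invf_le1 ?ler1n // ltr0n.
  rewrite (integration_by_substitution_onem (G := fun x : R => (1 - x) `^ r)) //; last first.
    apply: continuous_in_subspaceT => x; rewrite inE /= in_itv /= => /andP[_ xc].
    apply: (@continuous_comp _ _ _ (fun y : R => 1 - y) (fun y : R => y `^ r)).
      by apply: continuousB => //; exact: cvg_cst.
    apply: powR_cont; rewrite subr_gt0; apply: le_lt_trans xc _.
    by rewrite gtrBl invr_gt0 ltr0n.
  under eq_integral do rewrite /onem subKr.
  apply: (le_trans _ (pow_int r r1)).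
  apply: ge0_subset_integral => //=.
  - apply: (@measurable_EFinP _ _ _ _ (fun x : R => x `^ r)).2.
    apply: measurable_funTS; exact: measurable_powR.
  - by move=> x _; rewrite lee_fin powR_ge0.
  - move=> x; rewrite /= !in_itv /= => /andP[cx ->]; rewrite andbT.
    by apply: lt_le_trans cx; rewrite /onem opprB addrC subrK invr_gt0 ltr0n.
Qed.

Lemma neg_pow_le (p u : R) : 0 <= p -> 2^-1 <= u -> u `^ (- p) <= (2^-1) `^ (- p).
Proof.
move=> p0 hu.
have u0 : 0 < u by apply: lt_le_trans hu; rewrite invr_gt0.
rewrite !powRN lef_pV2 ?posrE ?powR_gt0 // ?invr_gt0 //.
by apply: ge0_ler_powR => //; rewrite ?nnegrE ?ltW // invr_ge0.
Qed.

Lemma pow_half_bound (s u : R) : 2^-1 <= u -> u <= 1 -> u `^ s <= 1 + (2^-1) `^ s.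
Proof.
move=> hu u1.
have u0 : 0 < u by apply: lt_le_trans hu; rewrite invr_gt0.
have [s0|s0] := leP 0 s.
  have h : u `^ s <= 1.
    apply: (@le_trans _ _ (1 `^ s)); last by rewrite powR1.
    by apply: ge0_ler_powR => //; rewrite nnegrE ltW.
  by apply: (le_trans h); rewrite lerDl powR_ge0.
have h : u `^ s <= (2^-1) `^ s.
  have p0 : 0 <= - s by rewrite oppr_ge0 ltW.
  have := neg_pow_le _ _ p0 hu; by rewrite opprK.
by apply: (le_trans h); rewrite lerDr.
Qed.

Definition Wf (A B : R) := fun t : R => t `^ (A - 1) * (1 - t) `^ (B - 1).

Lemma Wf_ge0 A B t : 0 <= Wf A B t.
Proof. by rewrite /Wf mulr_ge0 // powR_ge0. Qed.

Lemma Wf_meas A B (D : set R) : measurable D -> measurable_fun D (Wf A B).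
Proof.
move=> mD; apply: measurable_funTS; apply: measurable_funM.
  exact: measurable_powR.
apply: (@measurableT_comp _ _ _ _ _ _ (@powR R ^~ (B - 1))); first exact: measurable_powR.
by apply: measurable_funB => //; exact: measurable_cst.
Qed.

Lemma Wf_bound A B t : 0 < t -> t < 1 ->
  Wf A B t <= (1 + (2^-1) `^ (B-1)) * t `^ (A - 1) + (1 + (2^-1) `^ (A-1)) * (1 - t) `^ (B - 1).
Proof.
move=> t0 t1; rewrite /Wf.
have [th|th] := leP t (2^-1).
  apply: (@le_trans _ _ ((1 + (2^-1) `^ (B-1)) * t `^ (A - 1))); last first.
    by rewrite lerDl mulr_ge0 // ?powR_ge0 // addr_ge0 // powR_ge0.
  rewrite mulrC ler_wpM2r ?powR_ge0 //; apply: pow_half_bound.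
    by rewrite lerBrDl -lerBrDr {1}[X in X - _](splitr 1) mul1r addrK.
  by rewrite gerBl ltW.
apply: (@le_trans _ _ ((1 + (2^-1) `^ (A-1)) * (1 - t) `^ (B - 1))); last first.
  by rewrite lerDr mulr_ge0 // ?powR_ge0 // addr_ge0 // powR_ge0.
by rewrite ler_wpM2r ?powR_ge0 //; apply: pow_half_bound => //; rewrite ltW.
Qed.

Lemma Wf_int (A B : R) : 0 < A -> 0 < B ->
  mu.-integrable `[0%R, 1%R] (EFin \o Wf A B).
Proof.
move=> A0 B0.
have a1 : -1 < A - 1 by rewrite ltrBrDr addNr.
have b1 : -1 < B - 1 by rewrite ltrBrDr addNr.
apply/integrableP; split.
  by apply/measurable_EFinP; apply: Wf_meas.
under eq_integral do rewrite /= ger0_norm ?Wf_ge0 //.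
rewrite integral_itv_bndoo //; last first.
  by apply/measurable_EFinP; apply: Wf_meas.
set MB := 1 + (2^-1) `^ (B-1).
set MA := 1 + (2^-1) `^ (A-1).
have MB0 : 0 <= MB by rewrite addr_ge0 // powR_ge0.
have MA0 : 0 <= MA by rewrite addr_ge0 // powR_ge0.
apply: (@le_lt_trans _ _ (\int[mu]_(x in `]0%R, 1%R[)
   ((MB * x `^ (A - 1))%:E + (MA * (1 - x) `^ (B - 1))%:E))%E).
  apply: ge0_le_integral => //.
  - by move=> x _; rewrite lee_fin Wf_ge0.
  - by apply/measurable_EFinP; apply: Wf_meas.
  - apply: emeasurable_funD; apply/measurable_EFinP; apply: measurable_funM => //;
      apply: measurable_funTS.
    + exact: measurable_powR.
    + apply: (@measurableT_comp _ _ _ _ _ _ (@powR R ^~ (B - 1))); first exact: measurable_powR.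
      by apply: measurable_funB => //; exact: measurable_cst.
  - move=> x; rewrite /= in_itv /= => /andP[x0 x1].
    by rewrite -EFinD lee_fin; exact: Wf_bound.
have m1 : measurable_fun (`]0%R, 1%R[ : set R) (EFin \o (fun x : R => x `^ (A - 1))).
  by apply/measurable_EFinP; apply: measurable_funTS; exact: measurable_powR.
have m2 : measurable_fun (`]0%R, 1%R[ : set R) (EFin \o (fun x : R => (1 - x) `^ (B - 1))).
  apply/measurable_EFinP; apply: measurable_funTS.
  apply: (@measurableT_comp _ _ _ _ _ _ (@powR R ^~ (B - 1))); first exact: measurable_powR.
  by apply: measurable_funB => //; exact: measurable_cst.
rewrite ge0_integralD //; last 4 first.
- by move=> x _; rewrite lee_fin mulr_ge0 // powR_ge0.
- by apply/measurable_EFinP; apply: measurable_funM => //; apply/measurable_EFinP.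
- by move=> x _; rewrite lee_fin mulr_ge0 // powR_ge0.
- by apply/measurable_EFinP; apply: measurable_funM => //; apply/measurable_EFinP.
under eq_integral do rewrite EFinM.
under [X in (_ + X)%E]eq_integral do rewrite EFinM.
rewrite ge0_integralZl_EFin //; last by move=> x _; rewrite lee_fin powR_ge0.
rewrite ge0_integralZl_EFin //; last by move=> x _; rewrite lee_fin powR_ge0.
apply: (@le_lt_trans _ _ ((MB * (A - 1 + 1)^-1 + MA * (B - 1 + 1)^-1)%:E)); last exact: ltry.
rewrite (EFinD (MB / _)); apply: leeD; rewrite EFinM; apply: lee_wpmul2l => //.
- apply: (le_trans _ (pow_int _ a1)).
  apply: ge0_subset_integral => //=.
  + by apply/measurable_EFinP; apply: measurable_funTS; exact: measurable_powR.
  + by move=> x _; rewrite lee_fin powR_ge0.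
  + by move=> x; rewrite /= !in_itv /= => /andP[-> /ltW ->].
- apply: (le_trans _ (pow1m_int _ b1)).
  apply: ge0_subset_integral => //=.
  + apply/measurable_EFinP; apply: measurable_funTS.
    apply: (@measurableT_comp _ _ _ _ _ _ (@powR R ^~ (B - 1))); first exact: measurable_powR.
    by apply: measurable_funB => //; exact: measurable_cst.
  + by move=> x _; rewrite lee_fin powR_ge0.
  + by move=> x; rewrite /= !in_itv /= => /andP[/ltW -> ->].
Qed.

Definition Lw (s : R) : R := if 0 <= s then (4^-1) `^ s else 1.

Lemma Lw_gt0 s : 0 < Lw s.
Proof. by rewrite /Lw; case: ifP => // _; rewrite powR_gt0 // invr_gt0. Qed.

Lemma Lw_le s u : 4^-1 <= u -> u <= 1 -> Lw s <= u `^ s.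
Proof.
move=> hu u1.
have u0 : 0 < u by apply: lt_le_trans hu; rewrite invr_gt0.
rewrite /Lw; case: ifPn => s0.
  by apply: ge0_ler_powR => //; rewrite nnegrE ?ltW // invr_ge0.
have -> : s = - (- s) by rewrite opprK.
rewrite powRN invf_ge1 ?powR_gt0 //.
apply: (@le_trans _ _ (1 `^ (- s))); last by rewrite powR1.
apply: ge0_ler_powR => //; rewrite ?nnegrE ?ltW //.
by rewrite oppr_gt0 ltNge.
Qed.

Lemma Wf_pos A B : 0 < A -> 0 < B ->
  (0 < \int[mu]_(x in `[0%R, 1%R]) (Wf A B x)%:E)%E.
Proof.
move=> A0 B0.
apply: (@lt_le_trans _ _ (\int[mu]_(x in `[(4^-1)%R, (3/4)%R]) ((Lw (A-1) * Lw (B-1))%:E))%E).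
  rewrite integral_cst //=.
  have h34 : (4^-1 : R) < 3/4.
    rewrite ltr_pdivlMr // mulrC -ltr_pdivlMr // ?invr_gt0 // invrK.
    by rewrite -natrM ltr_nat.
  rewrite lebesgue_measure_itv /= lte_fin h34.
  by rewrite -EFinB -EFinM lte_fin mulr_gt0 // ?mulr_gt0 ?Lw_gt0 // subr_gt0.
apply: (@le_trans _ _ (\int[mu]_(x in `[(4^-1)%R, (3/4)%R]) ((Wf A B x)%:E))%E).
  apply: ge0_le_integral => //=.
  - by move=> x _; rewrite lee_fin mulr_ge0 // ltW // Lw_gt0.
  - by apply/measurable_EFinP; apply: Wf_meas; exact: measurable_itv.
  - move=> x; rewrite /= in_itv /= => /andP[x1 x2].
    rewrite lee_fin /Wf; apply: ler_pM.
    + exact: ltW (Lw_gt0 _).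
    + exact: ltW (Lw_gt0 _).
    + apply: Lw_le => //; lra.
    + apply: Lw_le; lra.
apply: ge0_subset_integral => //=.
- by apply/measurable_EFinP; apply: Wf_meas.
- by move=> x _; rewrite lee_fin Wf_ge0.
- move=> x; rewrite /= !in_itv /= => /andP[x1 x2].
  apply/andP; split; lra.
Qed.

Local Notation I01 := (`[0%R, 1%R]%classic : set R).

Lemma int_sum (I : Type) (s : seq I) (f : I -> R -> R) :
  (forall i, mu.-integrable I01 (EFin \o f i)) ->
  mu.-integrable I01 (EFin \o (fun t => \sum_(i <- s) f i t)).
Proof.
move=> Hi; elim: s => [|h s IH].
  apply: (@eq_integrable _ _ _ mu I01 _ (cst 0%E)).
  - exact: measurable_itv.
  - by move=> x _ /=; rewrite big_nil.
  - exact: integrable0.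
apply: (@eq_integrable _ _ _ mu I01 _ ((EFin \o f h) \+ (EFin \o (fun t => \sum_(i <- s) f i t)))).
- exact: measurable_itv.
- by move=> x _ /=; rewrite big_cons EFinD.
- by apply: integrableD => //; exact: measurable_itv.
Qed.

Lemma Rint_sum (I : Type) (s : seq I) (f : I -> R -> R) :
  (forall i, mu.-integrable I01 (EFin \o f i)) ->
  \int[mu]_(t in I01) (\sum_(i <- s) f i t) = \sum_(i <- s) \int[mu]_(t in I01) f i t.
Proof.
move=> Hi; elim: s => [|h s IH].
  under eq_Rintegral do rewrite big_nil.
  by rewrite big_nil Rintegral_cst ?mul0r //; exact: measurable_itv.
under eq_Rintegral do rewrite big_cons.
rewrite RintegralD //; first by rewrite IH big_cons.
exact: int_sum.
Qed.

Lemma powR_addn (t a : R) (k : nat) : 0 <= t -> 0 < a ->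
  t `^ (a + k%:R - 1) = t `^ (a - 1) * t ^+ k.
Proof.
move=> t0 a0; case: k => [|k].
  by rewrite addr0 expr0 mulr1.
have [->|tp] := eqVneq t 0.
  rewrite expr0n /= mulr0 powR0 //.
  have h1 : (1 : R) <= k.+1%:R by rewrite ler1n.
  apply: lt0r_neq0; lra.
rewrite -powR_mulrn // -powRD; last by rewrite tp implybT.
by congr (_ `^ _); ring.
Qed.

Lemma Wf_split1 (a b : R) (x y : nat) t : 0 < a -> 0 < b -> 0 <= t <= 1 ->
  Wf (a + x%:R) (b + y%:R) t = Wf a b t * t ^+ x * (1 - t) ^+ y.
Proof.
move=> a0 b0 /andP[t0 t1]; rewrite /Wf powR_addn // powR_addn //; last by rewrite subr_ge0.
ring.
Qed.

Lemma Wf_split2 (a b : R) (x y n m : nat) t : 0 < a -> 0 < b -> 0 <= t <= 1 ->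
  Wf (a + x%:R + n%:R) (b + y%:R + m%:R) t =
  Wf a b t * t ^+ x * (1 - t) ^+ y * t ^+ n * (1 - t) ^+ m.
Proof.
move=> a0 b0 t01; rewrite Wf_split1 //; last 2 first.
- by rewrite ltr_wpDr // ler0n.
- by rewrite ltr_wpDr // ler0n.
by rewrite Wf_split1.
Qed.

Lemma intZ k A B : 0 < A -> 0 < B ->
  mu.-integrable I01 (EFin \o (fun t => k * Wf A B t)).
Proof.
move=> A0 B0.
apply: (@eq_integrable _ _ _ mu I01 _ (fun t : R => k%:E * (Wf A B t)%:E)%E).
- exact: measurable_itv.
- by move=> x _ /=; rewrite EFinM.
- by apply: integrableZl => //; exact: Wf_int.
Qed.

Lemma RintZ k A B : 0 < A -> 0 < B ->
  \int[mu]_(t in I01) (k * Wf A B t) = k * betaF A B.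
Proof.
move=> A0 B0; rewrite RintegralZl //; exact: Wf_int.
Qed.

Lemma betaF_gt0 (A B : R) : 0 < A -> 0 < B -> 0 < betaF A B.
Proof.
move=> A0 B0.
have fin : (\int[mu]_(x in I01) (Wf A B x)%:E)%E \is a fin_num.
  by apply: integrable_fin_num => //; exact: Wf_int.
rewrite -lte_fin.
have -> : (betaF A B)%:E = (\int[mu]_(x in I01) (Wf A B x)%:E)%E by rewrite -(fineK fin).
exact: Wf_pos.
Qed.

Lemma binom_half k m : (k <= m)%N ->
  binom_pmf k m (1 / 2 : R) = 'C(m, k)%:R * (1 / 2) ^+ m.
Proof.
move=> km; rewrite /binom_pmf.
have -> : 1 - 1 / 2 = 1 / 2 :> R by field.
by rewrite -mulrA -exprD subnKC.
Qed.

Lemma marg_eq (a01 a10 : R) xT x : 0 < a01 -> 0 < a10 -> (x <= xT)%N ->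
  marg_H a01 a10 xT x =
  'C(xT, x)%:R / betaF a01 a10 * betaF (a01 + x%:R) (a10 + (xT - x)%:R).
Proof.
move=> a0 b0 xx.
have hb := betaF_gt0 _ _ a0 b0.
rewrite /marg_H -RintZ; last 2 first.
- by rewrite ltr_wpDr // ler0n.
- by rewrite ltr_wpDr // ler0n.
apply: eq_Rintegral => t; rewrite inE /= in_itv /= => t01.
rewrite Wf_split1 // /binom_pmf /pH /beta_dens /Wf.
field; exact: lt0r_neq0.
Qed.

Lemma main_prop (a01 a10 : R) (xT n01 nT : nat) :
  0 < a01 -> 0 < a10 -> (n01 <= nT)%N ->
  BF_CI a01 a10 xT n01 nT =
  \sum_(x01 < xT.+1)
     ('C(xT, x01))%:R * (1 / 2) ^+ xT * BF_Co a01 (a01 + a10) xT x01 n01 nT.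
Proof.
move=> a0 b0 nn.
have hb0 := betaF_gt0 _ _ a0 b0.
pose d (x : nat) := binom_pmf x xT (1/2) / marg_H a01 a10 xT x.
pose A' (x : nat) := a01 + x%:R + n01%:R.
pose B' (x : nat) := a10 + (xT - x)%:R + (nT - n01)%:R.
have hA x : 0 < A' x by rewrite /A' -addrA ltr_wpDr // addr_ge0 // ler0n.
have hB x : 0 < B' x by rewrite /B' -addrA ltr_wpDr // addr_ge0 // ler0n.
have pt : {in I01, (fun t => binom_pmf n01 nT t * pCI a01 a10 xT t) =1
   (fun t => \sum_(x < xT.+1)
      (d x * 'C(nT, n01)%:R * 'C(xT, x)%:R / betaF a01 a10) * Wf (A' x) (B' x) t)}.
  move=> t; rewrite inE /= in_itv /= => t01.
  rewrite /pCI mulr_sumr mulr_sumr; apply: eq_bigr => x _.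
  rewrite /A' /B' Wf_split2 // /d /binom_pmf /pH /beta_dens /Wf.
  ring.
rewrite /BF_CI /mCI_H.
have -> : \int[mu]_(t in I01) (binom_pmf n01 nT t * pCI a01 a10 xT t) =
  \int[mu]_(t in I01) (\sum_(x < xT.+1)
      (d x * 'C(nT, n01)%:R * 'C(xT, x)%:R / betaF a01 a10) * Wf (A' x) (B' x) t).
  exact: eq_Rintegral.
rewrite Rint_sum; last by move=> i; apply: intZ.
rewrite (eq_bigr (fun x : 'I_xT.+1 => (d x * 'C(nT, n01)%:R * 'C(xT, x)%:R / betaF a01 a10) * betaF (A' x) (B' x))); last first.
  by move=> x _; rewrite RintZ.
rewrite /mCo_H0 binom_half // mulr_suml; apply: eq_bigr => x _.
have xle : (x <= xT)%N by rewrite -ltnS.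
rewrite /d marg_eq // binom_half // /BF_Co /A' /B'.
have e1 : a01 + a10 - a01 + xT%:R - x%:R + nT%:R - n01%:R =
   a10 + (xT - x)%:R + (nT - n01)%:R :> R by rewrite !natrB //; ring.
have e2 : a01 + a10 - a01 + xT%:R - x%:R = a10 + (xT - x)%:R :> R
  by rewrite natrB //; ring.
rewrite e1 e2.
have hbx : 0 < betaF (a01 + x%:R) (a10 + (xT - x)%:R).
  by apply: betaF_gt0; rewrite ltr_wpDr // ler0n.
have hCx : 'C(xT, x)%:R != 0 :> R by rewrite pnatr_eq0 -lt0n bin_gt0.
have hCn : 'C(nT, n01)%:R != 0 :> R by rewrite pnatr_eq0 -lt0n bin_gt0.
rewrite !expr_div_n !expr1n.
have h2 : (2 : R) ^+ nT != 0 by rewrite expf_neq0 // pnatr_eq0.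
have h2' : (2 : R) ^+ xT != 0 by rewrite expf_neq0 // pnatr_eq0.
field.
by rewrite hCx hCn h2 h2' !lt0r_neq0.
Qed.
End S.

Theorem proposition6 (R : realType) (a01 a10 : R) (xT n01 nT : nat) :
  0 < a01 -> 0 < a10 -> (n01 <= nT)%N ->
  BF_CI a01 a10 xT n01 nT =
  \sum_(x01 < xT.+1)
     ('C(xT, x01))%:R * (1 / 2) ^+ xT * BF_Co a01 (a01 + a10) xT x01 n01 nT.
Proof. exact: main_prop. Qed.
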